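(* With the setting in the context, the set of vectors $\{\mathcal A_0|f\rangle : f\in\ker(\delta^0)\}$ is a basis of the ground state subspace $\mathcal H_0$. Moreover, for $f,g\in\ker(\delta^0)$ one has $\mathcal A_0|f\rangle=\mathcal A_0|g\rangle$ if and only if $f-g\in\mathrm{im}(\delta^{-1})$, so that $[f]\mapsto\mathcal A_0|f\rangle$ is a well-defined bijection from $H^0(C,G)=\ker\delta^0/\mathrm{im}\,\delta^{-1}$ onto this basis.
   Context: $(C_\bullet,\partial^C_\bullet)$ is a chain complex with each $C_n$ free abelian on a finite set $K_n$, $K_n\ne\emptyset$ for finitely many $n$; $(G_\bullet,\partial^G_\bullet)$ is a chain complex of finite abelian groups. $\mathrm{hom}(C,G)^p=\prod_n\mathrm{Hom}(C_n,G_{n-p})$ with $(\delta^pf)_n=f_{n-1}\partial^C_n-(-1)^p\partial^G_{n-p}f_n$. $\mathrm{hom}(C,G)_p=\mathrm{Hom}(\mathrm{hom}(C,G)^p,U(1))$ (written additively), $\chi_m(f)=m(f)$, $\delta_{p+1}m=m\circ\delta^p$. $\mathcal H=\bigotimes_n\bigotimes_{x\in K_n}\mathbb C[G_n]$ with orthonormal basis $|f\rangle$, $f\in\mathrm{hom}(C,G)^0$. $P_t|f\rangle=|f+t\rangle$, $Q_m|f\rangle=\chi_m(f)|f\rangle$; $A_t=P_{\delta^{-1}t}$ ($t\in\mathrm{hom}(C,G)^{-1}$), $B_m=Q_{\delta_1m}$ ($m\in\mathrm{hom}(C,G)_1$). $\mathcal A_0=\frac1{|\mathrm{hom}(C,G)^{-1}|}\sum_{t}A_t$.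 Local elements: for $x\in K_n$, $g\in G_{n-p}$, $gx^*\in\mathrm{hom}(C,G)^p$ has $n$-th component sending $x\mapsto g$ and other basis elements to $0$, other components $0$; for $r\in\mathrm{Hom}(G_{n-p},U(1))$, $rx_*(f)=r(f_n(x))$. $A_x^0=\frac1{|G_{n+1}|}\sum_{h\in G_{n+1}}A_{hx^*}$, $B_x^0=\frac1{|G_{n-1}|}\sum_{r\in\mathrm{Hom}(G_{n-1},U(1))}B_{rx_*}$ for $x\in K_n$; the ground state subspace is $\mathcal H_0=\{\Psi: A_x^0\Psi=B_x^0\Psi=\Psi\ \forall n,\forall x\in K_n\}$. *)

(* Defs.v *)
From HB Require Import structures.
From mathcomp Require Import all_boot all_order all_algebra.
From mathcomp Require Import boolp classical_sets fsbigop.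
Set Implicit Arguments. Unset Strict Implicit. Unset Printing Implicit Defensive.
Import Order.TTheory GRing.Theory Num.Theory.
Local Open Scope ring_scope.

Section Model.
Variable C : numClosedFieldType.
(* X = disjoint union of the finite bases K_n, dim x = n iff x \in K_n. *)
Variable X : finType.
Variable dim : X -> int.
Variable G : int -> finZmodType.
Variable dG : forall n : int, {additive G n -> G (n - 1)}.
(* Boundary of C: d^C_n x = \sum_{y} d x y . y  (x in K_n, y in K_{n-1}). *)
Variable d : X -> X -> int.

(* transport along an equality of degrees (0 if the degrees differ) *)
Definition castG (m n : int) (g : G m) : G n :=
  match m =P n with
  | ReflectT e => eq_rect m (fun k => G k : Type) g n e
  | ReflectF _ => 0
  end.
Arguments castG {m} n g.

(* hom(C,G)^p = prod_n Hom(C_n, G_{n-p}); a hom on the free group C_n is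
   its values on the basis K_n. *)
Definition cochain (p : int) := {dffun forall x : X, G (dim x - p)}.

Definition czero p : cochain p := [ffun x => 0].
Definition cadd p (f g : cochain p) : cochain p := [ffun x => f x + g x].
Definition copp p (f : cochain p) : cochain p := [ffun x => - f x].
Definition csub p (f g : cochain p) : cochain p := cadd f (copp g).

(* (delta^p f)_n = f_{n-1} d^C_n - (-1)^p d^G_{n-p} f_n *)
Definition delta p (f : cochain p) : cochain (p + 1) :=
  [ffun x => \sum_(y : X) (castG (dim x - (p + 1)) (f y) *~ d x y)
              - castG (dim x - (p + 1)) (dG _ (f x)) *~ ((-1) ^ p)].

(* Hilbert space with orthonormal basis |f>, f in hom(C,G)^0 *)
Definition state := {ffun cochain 0 -> C^o}.
Definition ket (f : cochain 0) : state := [ffun g => (g == f)%:R].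

(* P_t |f> = |f + t> ;  Q_chi |f> = chi(f) |f> *)
Definition Pop (t : cochain 0) (Psi : state) : state := [ffun g => Psi (csub g t)].
Definition Qop (chi : cochain 0 -> C) (Psi : state) : state :=
  [ffun g => chi g * Psi g].

Definition Aop (t : cochain (-1)) : state -> state := Pop (delta t).
Definition Bop (m : cochain 1 -> C) : state -> state := Qop (fun f => m (delta f)).

Definition A0 (Psi : state) : state :=
  (#|{: cochain (-1)}|%:R)^-1 *: \sum_(t : cochain (-1)) Aop t Psi.

Definition loc p (x : X) (g : G (dim x - p)) : cochain p :=
  [ffun y => if y == x then castG (dim y - p) g else 0].

(* Hom(T, U(1)) as maps T -> C *)
Definition chars (T : finZmodType) : set {ffun T -> C} :=
  [set r | (forall a b, r (a + b) = r a * r b) /\ (forall a, `|r a| = 1)].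
Arguments chars T : clear implicits.

Definition Ax0 (x : X) (Psi : state) : state :=
  (#|{: G (dim x + 1)}|%:R)^-1 *:
    \sum_(h : G (dim x + 1)) Aop (loc (castG (dim x - -1) h)) Psi.

Definition Bx0 (x : X) (Psi : state) : state :=
  (#|{: G (dim x - 1)}|%:R)^-1 *:
    \sum_(r \in chars (G (dim x - 1))) Bop (fun f : cochain 1 => r (f x)) Psi.

Definition ground (Psi : state) : Prop :=
  forall x : X, Ax0 x Psi = Psi /\ Bx0 x Psi = Psi.

Definition groundvecs : seq state :=
  undup [seq A0 (ket f) | f <- enum {: cochain 0} & delta f == czero (0 + 1)].

End Model.

(* Main.v *)
Require Import Defs.
From HB Require Import structures.
From mathcomp Require Import all_boot all_order all_algebra.
From mathcomp Require fingroup cyclic.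
From mathcomp Require Import boolp classical_sets fsbigop cardinality.
From mathcomp Require Import finmap zify.
From mathcomp Require Import fintype finset.
Set Implicit Arguments. Unset Strict Implicit. Unset Printing Implicit Defensive.
Import Order.TTheory GRing.Theory Num.Theory.
Local Open Scope ring_scope.

Section Chars.
Variable C : numClosedFieldType.
Variable T : finZmodType.

Lemma mulrn_card (g : T) : g *+ #|T| = 0.
Proof.
have := @cyclic.order_dvdG _ (fingroup.setT_group (FinRing.Zmodule_to_finGroup T)) g (finset.in_setT g).
rewrite cardsT => /dvdnP[q ->]; rewrite mulnC mulrnA.
by have := fingroup.expg_order g; rewrite FinRing.zmodXgE => ->; exact: mul0rn.
Qed.

Definition subgrp (H : {set T}) := (0 \in H) /\ {in H &, forall u v, u - v \in H}.
Definition homon (H : {set T}) (r : T -> C) :=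
  r 0 = 1 /\ {in H &, forall u v, r (u + v) = r u * r v}.

Lemma subgrpN H u : subgrp H -> u \in H -> - u \in H.
Proof. by move=> [H0 HB] Hu; rewrite -sub0r HB. Qed.

Lemma subgrpD H u v : subgrp H -> u \in H -> v \in H -> u + v \in H.
Proof. by move=> sH Hu Hv; have [_ HB] := sH; rewrite -[v]opprK HB // subgrpN. Qed.

Lemma subgrpMn H u k : subgrp H -> u \in H -> u *+ k \in H.
Proof.
move=> sH Hu; elim: k => [|k IH]; first by rewrite mulr0n; case: sH.
by rewrite mulrS subgrpD.
Qed.

Lemma ext_step H r g z m : subgrp H -> homon H r -> g \notin H ->
  (0 < m)%N -> g *+ m \in H -> (forall k, (0 < k < m)%N -> g *+ k \notin H) ->
  z ^+ m = r (g *+ m) ->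
  exists H' r', [/\ subgrp H', homon H' r', H \subset H', g \in H'
                   & {in H, r' =1 r}] /\ r' g = z.
Proof.
move=> sH [r0 rM] gH m0 gmH minm zm.
have [H0 HB] := sH.
have m1 : (1 < m)%N.
  case: m m0 gmH {minm zm} => [|[|m]] //=; by rewrite mulr1n (negbTE gH).
have uniqk (u : T) (k k' : 'I_m) : u - g *+ k \in H -> u - g *+ k' \in H -> k = k'.
  wlog le : k k' / (k' <= k)%N.
    move=> W h1 h2; case: (leqP k' k) => [l|l]; first exact: W.
    by apply/esym/W => //; apply: ltnW.
  move=> h1 h2; have := HB _ _ h2 h1.
  rewrite opprB addrC addrA addrNK -mulrnBr //.
  case: (posnP (k - k')) => [e|p].
    by move=> _; apply/val_inj/eqP; rewrite eqn_leq le -subn_eq0 e.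
  move=> hk; have := minm (k - k')%N; rewrite p hk /=.
  by rewrite (leq_ltn_trans (leq_subr _ _) (ltn_ord k)) => /(_ isT).
pose H' := [set u | [exists k : 'I_m, u - g *+ k \in H]].
pose r' u := if [pick k : 'I_m | u - g *+ k \in H] is Some k then r (u - g *+ k) * z ^+ k else 0.
have rep (h : T) (k : nat) : h \in H -> (k < m)%N -> r' (h + g *+ k) = r h * z ^+ k.
  move=> hH km; rewrite /r'; case: pickP => [k' hk'|/(_ (Ordinal km))]; last by rewrite addrK hH.
  have := uniqk _ k' (Ordinal km) hk'; rewrite addrK => /(_ hH) ->.
  by rewrite /= addrK.
have inH' (h : T) (k : nat) : h \in H -> (k < m)%N -> h + g *+ k \in H'.
  by move=> hH km; rewrite inE; apply/existsP; exists (Ordinal km); rewrite /= addrK.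
have decH' u : u \in H' -> exists h k, [/\ h \in H, (k < m)%N & u = h + g *+ k].
  rewrite inE => /existsP[k hk]; exists (u - g *+ k), k; split => //.
  by rewrite subrK.
exists H', r'; split; first split.
- split; first by rewrite -[0]addr0 -{2}(mulr0n g) inH'.
  move=> u v /decH'[h [k [hH km ->]]] /decH'[h' [k' [hH' km' ->]]].
  case: (leqP k' k) => l.
    have -> : h + g *+ k - (h' + g *+ k') = (h - h') + g *+ (k - k').
      rewrite mulrnBr // opprD; rewrite addrACA. by [].
    by apply: inH'; [apply: HB | rewrite (leq_ltn_trans (leq_subr _ _) km)].
  have -> : h + g *+ k - (h' + g *+ k') = (h - h' - g *+ m) + g *+ (m + k - k').
    rewrite mulrnBr ?mulrnDr; last by lia.
    by rewrite opprD !addrA subrK [h + _ - _]addrAC.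
  apply: inH'; first by rewrite HB // HB.
  by lia.
- split; first by have := rep 0 0%N H0 m0; rewrite mulr0n addr0 r0 mulr1.
  move=> u v /decH'[h [k [hH km ->]]] /decH'[h' [k' [hH' km' ->]]].
  have hh : h + h' \in H by apply: subgrpD.
  case: (ltnP (k + k') m) => l.
    rewrite addrACA -mulrnDr rep // rep // rep // rM // exprD.
    by rewrite mulrACA.
  have -> : h + g *+ k + (h' + g *+ k') = (h + h' + g *+ m) + g *+ (k + k' - m).
    by rewrite -[RHS]addrA -mulrnDr subnKC // addrACA -mulrnDr.
  have hm : h + h' + g *+ m \in H by rewrite subgrpD.
  rewrite (rep _ _ hm); last by lia.
  rewrite (rep _ _ hH km) (rep _ _ hH' km') rM // rM // -zm -mulrA -exprD subnKC //.
  by rewrite exprD mulrACA.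
- by apply/fintype.subsetP => h hH; have := inH' h 0%N hH m0; rewrite mulr0n addr0.
- by have := inH' 0 1%N H0 m1; rewrite add0r mulr1n.
- by move=> h hH; have := rep h 0%N hH m0; rewrite mulr0n addr0 expr0 mulr1.
- by have := rep 0 1%N H0 m1; rewrite add0r mulr1n r0 mul1r expr1.
Qed.

Lemma setC0_full (H : {set T}) : ~: H = set0 -> H = [set: T].
Proof.
move=> e; apply/setP => u; rewrite finset.in_setT.
by apply/negPn; rewrite -in_setC e in_set0.
Qed.

Lemma ext_full n H r : subgrp H -> homon H r -> (#|~: H| <= n)%N ->
  exists r', homon [set: T] r' /\ {in H, r' =1 r}.
Proof.
elim: n H r => [|n IH] H r sH hr.
  rewrite leqn0 cards_eq0 => /eqP/setC0_full HT.
  by exists r; split => //; rewrite -HT.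
move=> cn.
case: (set_0Vmem (~: H)) => [/setC0_full HT|[g gH]].
  by exists r; split => //; rewrite -HT.
rewrite in_setC in gH.
have ex : exists k, (0 < k)%N && (g *+ k \in H).
  exists #|T|; rewrite mulrn_card (proj1 sH) andbT.
  by apply/card_gt0P; exists 0.
case: (ex_minnP ex) => m /andP[m0 gmH] minm.
have minm' : forall k, (0 < k < m)%N -> g *+ k \notin H.
  move=> k /andP[k0 km]; apply/negP => gk; have := minm k; rewrite k0 gk => /(_ isT).
  by rewrite leqNgt km.
have zm := rootCK m0 (r (g *+ m)).
have [H' [r' [[sH' hr' sub gH' agree] _]]] := ext_step sH hr gH m0 gmH minm' zm.
have [|r'' [hr'' agree']] := IH H' r' sH' hr'.
  rewrite -ltnS; apply: leq_trans cn; apply: proper_card; apply/properP; split.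
    by rewrite setCS.
  by exists g; rewrite !in_setC ?gH ?gH'.
exists r''; split => // u uH; rewrite agree' ?agree //.
by apply: (fintype.subsetP sub).
Qed.

Lemma homon_exp r u k : homon [set: T] r -> r (u *+ k) = r u ^+ k.
Proof.
move=> [r0 rM]; elim: k => [|k IH]; first by rewrite mulr0n r0 expr0.
by rewrite mulrS rM ?finset.in_setT // IH exprS.
Qed.

Lemma homon_chars r : homon [set: T] r -> @chars C T [ffun u => r u].
Proof.
move=> hr; split => [a b|a]; rewrite !ffunE.
  by case: hr => _ rM; rewrite rM ?finset.in_setT.
have : r a ^+ #|T| = 1 by rewrite -homon_exp // mulrn_card; case: hr.
move=> /(congr1 (fun x => `|x|)); rewrite normrX normr1 => /eqP.
rewrite pexpr_eq1 ?normr_ge0 //; last by apply/card_gt0P; exists 0.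
by move/eqP.
Qed.

Lemma chars_sep (a : T) : a != 0 -> exists2 r, @chars C T r & r a != 1.
Proof.
move=> a0.
pose H0 := [set 0 : T].
have sH0 : subgrp H0.
  split; first by rewrite in_set1.
  by move=> u v; rewrite !in_set1 => /eqP -> /eqP ->; rewrite subr0.
have hr0 : homon H0 (fun _ => 1 : C) by split => // u v _ _; rewrite mulr1.
have ex : exists k, (0 < k)%N && (a *+ k \in H0).
  exists #|T|; rewrite mulrn_card in_set1 eqxx andbT.
  by apply/card_gt0P; exists 0.
case: (ex_minnP ex) => m /andP[m0 gmH] minm.
have minm' : forall k, (0 < k < m)%N -> a *+ k \notin H0.
  move=> k /andP[k0 km]; apply/negP => gk; have := minm k; rewrite k0 gk => /(_ isT).
  by rewrite leqNgt km.
have aH0 : a \notin H0 by rewrite in_set1.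
have m1 : (1 < m)%N.
  case: m m0 gmH {minm minm'} => [|[|m]] //=; by rewrite mulr1n (negbTE aH0).
pose p := \poly_(i < m) (1 : C).
have sp : size p = m by rewrite size_poly_eq // oner_neq0.
have [z rz] : exists z, root p z by apply/closed_rootP; rewrite sp; case: m m1 {minm minm' gmH m0 sp p} => [|[|]].
move: rz; rewrite /root horner_poly => /eqP sz.
have sz' : \sum_(i < m) z ^+ i = 0 by rewrite -[RHS]sz; apply: eq_bigr => i _; rewrite mul1r.
have z1 : z != 1.
  apply/eqP => e; move: sz'; rewrite e.
  under eq_bigr do rewrite expr1n.
  rewrite sumr_const card_ord => /eqP; rewrite pnatr_eq0 => /eqP m00; by rewrite m00 in m0.
have zm : z ^+ m = 1.
  by apply/eqP; rewrite -subr_eq0 subrX1 sz' mulr0.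
have [H1 [r1 [[sH1 hr1 _ aH1 _] r1a]]] := ext_step sH0 hr0 aH0 m0 gmH minm' zm.
have [r [hr agr]] := ext_full sH1 hr1 (leqnn _).
exists [ffun u => r u]; first exact: homon_chars.
by rewrite ffunE agr // r1a.
Qed.

End Chars.
Section CharSum.
Variable C : numClosedFieldType.
Variable T : finZmodType.
Implicit Types r s : {ffun T -> C}.
Local Notation ch := (@chars C T).

Lemma char_neq0 r a : ch r -> r a != 0.
Proof.
move=> [_ n]; apply/eqP => e; move: (n a); rewrite e normr0 => /eqP.
by rewrite eq_sym oner_eq0.
Qed.

Lemma char0 r : ch r -> r 0 = 1.
Proof.
move=> hr; have := (proj1 hr) 0 0; rewrite addr0 => e.
have n0 := char_neq0 0 hr.
by apply: (mulfI n0); rewrite mulr1 -e.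
Qed.

Lemma charN r a : ch r -> r (- a) * r a = 1.
Proof. by move=> hr; rewrite -(proj1 hr) addNr char0. Qed.

Lemma charM r s : ch r -> ch s -> ch [ffun a => r a * s a].
Proof.
move=> [hr nr] [hs ns]; split => [a b|a]; rewrite !ffunE.
  by rewrite hr hs mulrACA.
by rewrite normrM nr ns mulr1.
Qed.

Lemma charV r : ch r -> ch [ffun a => r (- a)].
Proof. by move=> [hr nr]; split => [a b|a]; rewrite !ffunE ?opprD ?hr. Qed.

Lemma char_pow r a : ch r -> r a ^+ #|T| = 1.
Proof.
move=> hr; rewrite -(char0 hr) -(mulrn_card a).
elim: #|T| => [|k IH]; first by rewrite mulr0n expr0 char0.
by rewrite mulrS (proj1 hr) -IH exprS.
Qed.

Lemma chars_finite : finite_set ch.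
Proof.
pose N := #|T|.
have N0 : (0 < N)%N by apply/card_gt0P; exists 0.
pose p : {poly C} := 'X^N - 1.
have [rs prs] := closed_field_poly_normal p.
have p0 : p != 0.
  apply/eqP => e; have := congr1 (fun q => q.[0]) e.
  rewrite /p !hornerE expr0n (negbTE (lt0n_neq0 N0)) /=.
  by move/eqP; rewrite sub0r oppr_eq0 oner_eq0.
have inrs z : z ^+ N = 1 -> z \in rs.
  move=> zN; have lc : lead_coef p != 0 by rewrite lead_coef_eq0.
  rewrite -root_prod_XsubC -(rootZ _ _ lc).
  by rewrite -prs /root /p !hornerE zN subrr.
pose F := map (fun f : {ffun T -> 'I_(size rs)} => [ffun a => nth 0 rs (f a)] : {ffun T -> C}) (enum {: {ffun T -> 'I_(size rs)}}).
apply: (@sub_finite_set _ _ [set` F]); last exact: finite_seq.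
move=> r hr /=.
have im a : (index (r a) rs < size rs)%N by rewrite index_mem inrs // char_pow.
apply/mapP; exists [ffun a => Ordinal (im a)]; first by rewrite mem_enum.
by apply/ffunP => a; rewrite !ffunE /= nth_index // inrs // char_pow.
Qed.

Definition cs := fset_set ch.

Lemma in_cs r : r \in cs -> ch r.
Proof. by rewrite in_fset_set; [move/set_mem|exact: chars_finite]. Qed.

Lemma cs_in r : ch r -> r \in cs.
Proof. by move=> hr; rewrite in_fset_set; [apply: mem_set|exact: chars_finite]. Qed.

Lemma sum_chars_sep a : a != 0 -> \sum_(r <- cs) r a = 0.
Proof.
move=> a0; have [r0 hr0 r0a] := chars_sep C a0.
pose mu r := [ffun b => r0 b * r b].
have hperm : perm_eq cs (map mu cs).
  apply: uniq_perm; first exact: fset_uniq.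
    rewrite map_inj_uniq ?fset_uniq // => r s e; apply/ffunP => b.
    have := congr1 (fun f : {ffun T -> C} => f b) e; rewrite /mu !ffunE.
    by apply: mulfI; apply: char_neq0.
  move=> r; apply/idP/mapP => [rc|[s sc ->]]; last by apply: cs_in; exact: (charM hr0 (in_cs sc)).
  exists [ffun b => [ffun a => r0 (- a)] b * r b]; first by apply: cs_in; exact: (charM (charV hr0) (in_cs rc)).
  by apply/ffunP => b; rewrite /mu !ffunE mulrA (mulrC (r0 b)) charN // mul1r.
have e1 : \sum_(r <- cs) r0 a * r a = \sum_(r <- map mu cs) r a.
  by rewrite big_map; apply: eq_bigr => q _; rewrite ffunE.
have e2 : \sum_(r <- map mu cs) r a = \sum_(r <- cs) r a.
  by apply/esym; apply: perm_big; exact: hperm.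
have e : \sum_(r <- cs) r a = r0 a * \sum_(r <- cs) r a.
  by rewrite mulr_sumr e1 e2.
move/eqP: e; rewrite -subr_eq0 -{1}[\sum_(i <- cs) i a]mul1r -mulrBl mulf_eq0.
by rewrite subr_eq0 eq_sym (negbTE r0a) => /eqP.
Qed.

Lemma sum_T r : ch r -> \sum_(a : T) r a = (r == [ffun=> 1])%:R * #|T|%:R.
Proof.
move=> hr; case: eqP => [->|ne].
  by under eq_bigr do rewrite ffunE; rewrite sumr_const mul1r.
have [b rb] : exists b, r b != 1.
  apply/existsP; rewrite -negb_forall; apply/negP => /forallP h; apply: ne.
  by apply/ffunP => b; rewrite ffunE; apply/eqP/h.
have e : \sum_(a : T) r a = \sum_(a : T) r a * r b.
  rewrite (reindex_inj (addIr b)); apply: eq_bigr => a _.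
  by rewrite (proj1 hr).
move/eqP: e; rewrite -mulr_suml -subr_eq0 -{1}[\sum_(a : T) r a]mulr1 -mulrBr mulf_eq0.
by rewrite subr_eq0 [1 == _]eq_sym (negbTE rb) orbF mul0r => /eqP.
Qed.

Lemma sum_chars0 : \sum_(r <- cs) r 0 = (size cs)%:R.
Proof.
rewrite -sum1_size natr_sum big_seq [RHS]big_seq; apply: eq_bigr => r rc.
by rewrite char0 //; apply: in_cs.
Qed.

Lemma one_char : ch [ffun=> 1].
Proof. by split => [a b|a]; rewrite !ffunE ?mulr1 ?normr1. Qed.

Lemma size_cs : (size cs)%:R = #|T|%:R :> C.
Proof.
have e1 : \sum_(a : T) \sum_(r <- cs) r a = (size cs)%:R.
  rewrite (bigD1 0) //= sum_chars0 big1 ?addr0 // => a a0.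
  exact: sum_chars_sep.
rewrite -e1 exchange_big /=.
rewrite big_seq (eq_bigr (fun r => (r == [ffun=> 1])%:R * #|T|%:R)); last first.
  by move=> r rc; apply: sum_T; apply: in_cs.
rewrite -big_seq (bigD1_seq [ffun=> 1]) ?fset_uniq //=; last exact: cs_in one_char.
by rewrite eqxx mul1r big1 ?addr0 // => r /negbTE ->; rewrite mul0r.
Qed.

Lemma sum_chars a : \sum_(r <- cs) r a = #|T|%:R * (a == 0)%:R.
Proof.
case: (eqVneq a 0) => [->|a0]; first by rewrite sum_chars0 size_cs mulr1.
by rewrite sum_chars_sep // mulr0.
Qed.
End CharSum.


Section Coch.
Variable X : finType.
Variable dim : X -> int.
Variable G : int -> finZmodType.
Variable dG : forall n : int, {additive G n -> G (n - 1)}.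
Variable d : X -> X -> int.
Hypothesis d_supp : forall x y : X, d x y != 0 -> dim y = dim x - 1.
Hypothesis dd : forall x z : X, \sum_(y : X) d x y * d y z = 0.
Hypothesis dGdG : forall (n : int) (g : G n), dG (n - 1) (dG n g) = 0.

Lemma castG_id n (g : G n) : castG n g = g.
Proof. by rewrite /castG; case: (n =P n) => // e; rewrite (eq_axiomK e). Qed.

Lemma castG_neq m n (g : G m) : m != n -> castG n g = 0.
Proof. by rewrite /castG; case: (m =P n) => // ->; rewrite eqxx. Qed.

Lemma castG_comp k m n (g : G k) : k = m -> castG n (castG m g) = castG n g.
Proof. by move=> e; case: m / e; rewrite castG_id. Qed.

Lemma castGD m n (a b : G m) : castG n (a + b) = castG n a + castG n b.
Proof.
case: (eqVneq m n) => [e|ne]; first by case: n / e; rewrite !castG_id.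
by rewrite !castG_neq // addr0.
Qed.

Lemma castG0 m n : castG n (0 : G m) = 0.
Proof.
case: (eqVneq m n) => [e|ne]; first by case: n / e; rewrite !castG_id.
by rewrite !castG_neq.
Qed.

Lemma castGN m n (a : G m) : castG n (- a) = - castG n a.
Proof.
case: (eqVneq m n) => [e|ne]; first by case: n / e; rewrite !castG_id.
by rewrite !castG_neq // oppr0.
Qed.

Lemma castGB m n (a b : G m) : castG n (a - b) = castG n a - castG n b.
Proof. by rewrite castGD castGN. Qed.

Lemma castGMz m n (a : G m) z : castG n (a *~ z) = castG n a *~ z.
Proof.
case: (eqVneq m n) => [e|ne]; first by case: n / e; rewrite !castG_id.
by rewrite !castG_neq // mul0rz.
Qed.

Lemma castG_sum m n (I : Type) (s : seq I) (F : I -> G m) :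
  castG n (\sum_(i <- s) F i) = \sum_(i <- s) castG n (F i).
Proof.
elim: s => [|i s IH]; first by rewrite !big_nil castG0.
by rewrite !big_cons castGD IH.
Qed.

Lemma castG_dG m n (g : G m) : m = n -> castG (n - 1) (dG m g) = dG n (castG n g).
Proof. by move=> e; case: n / e; rewrite !castG_id. Qed.

Local Notation coch := (cochain dim G).
Local Notation delta := (delta dG d).

Lemma deltaD p (f g : coch p) : delta (cadd f g) = cadd (delta f) (delta g).
Proof.
apply/ffunP => x; rewrite !ffunE (raddfD (dG _)) castGD mulrzDl.
under eq_bigr do rewrite ffunE castGD mulrzDl.
by rewrite big_split /= !opprD addrACA.
Qed.

Lemma delta0 p : delta (czero dim G p) = czero dim G (p + 1).
Proof.
apply/ffunP => x; rewrite !ffunE (raddf0 (dG _)) castG0 mul0rz subr0.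
by apply: big1 => y _; rewrite ffunE castG0 mul0rz.
Qed.

Lemma deltaN p (f : coch p) : delta (copp f) = copp (delta f).
Proof.
apply/ffunP => x; rewrite !ffunE (raddfN (dG _)) castGN mulNrz.
under eq_bigr do rewrite ffunE castGN mulNrz.
by rewrite sumrN !opprD.
Qed.

Lemma deltaB p (f g : coch p) : delta (csub f g) = csub (delta f) (delta g).
Proof. by rewrite /csub deltaD deltaN. Qed.


Lemma deltaK (t : coch (-1)) : @Defs.delta _ _ _ dG d 0 (delta t) = czero dim G (0 + 1).
Proof.
apply/ffunP => x; rewrite [RHS]ffunE ffunE.
have T1 y : castG (dim x - (0 + 1)) ((delta t) y) *~ d x y =
    \sum_z castG (dim x - (0 + 1)) (t z) *~ (d x y * d y z)
    + castG (dim x - (0 + 1)) (dG _ (t y)) *~ d x y.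
  case: (eqVneq (d x y) 0) => [->|nxy].
    by rewrite !mulr0z addr0 big1 // => z _; rewrite mul0r mulr0z.
  have ey := d_supp nxy.
  rewrite ffunE castGB castG_sum mulrzBl mulrz_suml.
  congr (_ + _).
    apply: eq_bigr => z _; rewrite castGMz -mulrzA mulrC.
    case: (eqVneq (d y z) 0) => [->|nyz]; first by rewrite ?mulr0 ?mul0r !mulr0z ?mul0rz.
    have ez := d_supp nyz.
    by rewrite castG_comp //; lia.
  change ((-1 : int) ^ (-1 : int)) with (-1 : int).
  by rewrite castGMz mulrN1z castG_comp ?castGN ?mulNrz ?opprK //; lia.
have T2 : castG (dim x - (0 + 1)) (dG (dim x - 0) ((delta t) x)) =
    \sum_y castG (dim x - (0 + 1)) (dG _ (t y)) *~ d x y.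
  rewrite ffunE (raddfB (dG _)) (raddf_sum (dG _)) castGB castG_sum.
  have -> : castG (dim x - (0 + 1)) (dG (dim x - 0) (castG (dim x - (-1 + 1))
       (dG (dim x - -1) (t x)) *~ (-1) ^ (-1))) = 0.
    rewrite (raddfMz (dG _)) castGMz -castG_dG; last by lia.
    by rewrite dGdG castG0 castG0 mul0rz.
  rewrite subr0; apply: eq_bigr => y _.
  rewrite (raddfMz (dG _)) castGMz.
  case: (eqVneq (d x y) 0) => [->|nxy]; first by rewrite !mulr0z.
  have ey := d_supp nxy.
  rewrite -castG_dG; last by lia.
  by rewrite castG_comp //; lia.
rewrite T2 (eq_bigr _ (fun y _ => T1 y)) big_split /= exchange_big /=.
rewrite big1 ?add0r; last first.
  by move=> z _; rewrite -mulrz_sumr dd mulr0z.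
change ((-1 : int) ^ (0 : int)) with (1 : int).
by rewrite mulr1z subrr.
Qed.

End Coch.


Section Group.
Variable X : finType.
Variable dim : X -> int.
Variable G : int -> finZmodType.
Local Notation coch := (cochain dim G).

Lemma csubA p (g a b : coch p) : csub (csub g a) b = csub g (cadd a b).
Proof. by apply/ffunP => x; rewrite !ffunE opprD addrA. Qed.

Lemma csub0 p (g : coch p) : csub g (czero dim G p) = g.
Proof. by apply/ffunP => x; rewrite !ffunE oppr0 addr0. Qed.

Lemma csubK p (g a : coch p) : cadd (csub g a) a = g.
Proof. by apply/ffunP => x; rewrite !ffunE subrK. Qed.

Lemma caddK p (g a : coch p) : csub (cadd g a) a = g.
Proof. by apply/ffunP => x; rewrite !ffunE addrK. Qed.

Lemma csub_eq p (g a f : coch p) : (csub g a == f) = (g == cadd f a).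
Proof.
apply/eqP/eqP => [<-|->]; [by rewrite csubK | by rewrite caddK].
Qed.

Lemma csubKr p (f g : coch p) : csub f (csub f g) = g.
Proof. by apply/ffunP => x; rewrite !ffunE opprB subrKC. Qed.

Lemma cadd_inj p (s : coch p) : injective (fun t => cadd t s).
Proof. by move=> a b /= e; rewrite -(caddK a s) e caddK. Qed.

Lemma caddC p (a b : coch p) : cadd a b = cadd b a.
Proof. by apply/ffunP => x; rewrite !ffunE; apply: addrC. Qed.
End Group.

Section Ops.
Variable C : numClosedFieldType.
Variable X : finType.
Variable dim : X -> int.
Variable G : int -> finZmodType.
Variable dG : forall n : int, {additive G n -> G (n - 1)}.
Variable d : X -> X -> int.
Hypothesis d_supp : forall x y : X, d x y != 0 -> dim y = dim x - 1.
Hypothesis dd : forall x z : X, \sum_(y : X) d x y * d y z = 0.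
Hypothesis dGdG : forall (n : int) (g : G n), dG (n - 1) (dG n g) = 0.
Local Notation coch := (cochain dim G).
Local Notation st := (state C dim G).
Local Notation delta := (delta dG d).
Local Notation N := (#|{: coch (-1)}|%:R : C).

Lemma natr_neq0 (n : nat) : (0 < n)%N -> (n%:R : C) != 0.
Proof. by rewrite pnatr_eq0 -lt0n. Qed.

Lemma A0_ketE (f g : coch 0) : A0 dG d (ket C f) g =
  N^-1 * ((\sum_(t : coch (-1)) (csub g (delta (t : coch (-1))) == f))%N)%:R.
Proof.
rewrite ffunE sum_ffunE natr_sum; congr (_ * _); apply: eq_bigr => t _.
by rewrite !ffunE.
Qed.

Lemma N_neq0 : N != 0.
Proof. by apply: natr_neq0; apply/card_gt0P; exists (czero dim G (-1)). Qed.

Lemma A0_ket_neq0 (f g : coch 0) : A0 dG d (ket C f) g != 0 <-> exists t : coch (-1), csub g (delta t) = f.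
Proof.
rewrite A0_ketE mulf_eq0 invr_eq0 negb_or N_neq0 /= pnatr_eq0 -lt0n.
split => [s|[t e]].
  have [t ht] : exists t : coch (-1), csub g (delta t) == f.
    apply/existsP; apply: contraLR s => /existsPn h.
    by rewrite -leqNgt leqn0 sum_nat_eq0; apply/forallP => t; rewrite eqb0 h.
  by exists t; apply/eqP.
by rewrite (bigD1 t) //= e eqxx.
Qed.

Lemma A0_ket_shift (f g : coch 0) (s : coch (-1)) : A0 dG d (ket C f) (csub g (delta s)) = A0 dG d (ket C f) g.
Proof.
rewrite !A0_ketE; congr (_ * _%:R).
rewrite [RHS](reindex_inj (@cadd_inj _ _ _ _ s)); apply: eq_bigr => t _.
by rewrite /= deltaD csubA caddC.
Qed.

Lemma A0_ket_eq (f f' : coch 0) : (exists s : coch (-1), csub f f' = delta s) -> A0 dG d (ket C f) = A0 dG d (ket C f').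
Proof.
move=> [s e]; apply/ffunP => h; rewrite !A0_ketE; congr (_ * _%:R).
rewrite [RHS](reindex_inj (@cadd_inj _ _ _ _ s)); apply: eq_bigr => t _ /=.
by rewrite [in RHS]deltaD -[in RHS]csubA [in RHS]csub_eq -e [in RHS]caddC csubK.
Qed.


Lemma Ax0E x (Psi : st) (g : coch 0) : Ax0 dG d x Psi g =
  (#|{: G (dim x + 1)}|%:R)^-1 *
    \sum_(h : G (dim x + 1)) Psi (csub g (delta (loc (castG (dim x - -1) h) : coch (-1)))).
Proof.
rewrite ffunE sum_ffunE; congr (_ * _); apply: eq_bigr => h _.
by rewrite ffunE.
Qed.



Lemma locD' x (a b : G (dim x - -1)) :
  (loc (a + b) : coch (-1)) = cadd (loc a) (loc b).
Proof.
apply/ffunP => y; rewrite !ffunE; case: eqP => _; first exact: castGD.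
by rewrite addr0.
Qed.

Lemma Ax0_fix x (Psi : st) : Ax0 dG d x Psi = Psi <->
  forall (h : G (dim x + 1)) (g : coch 0),
    Psi (csub g (delta (loc (castG (dim x - -1) h) : coch (-1)))) = Psi g.
Proof.
split => [e h0 g|inv].
  have := congr1 (fun F : st => F g) e.
  have := congr1 (fun F : st => F (csub g (delta (loc (castG (dim x - -1) h0) : coch (-1))))) e.
  rewrite !Ax0E => <- <-; congr (_ * _).
  rewrite [in RHS](reindex_inj (addrI h0)); apply: eq_bigr => h _ /=.
  by rewrite csubA castGD locD' deltaD.
apply/ffunP => g; rewrite Ax0E.
under eq_bigr do rewrite inv.
rewrite sumr_const -(mulr_natr (Psi g)) mulrCA mulVf ?mulr1 //.
by apply: natr_neq0; apply/card_gt0P; exists 0.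
Qed.

Lemma Bx0E x (Psi : st) (g : coch 0) :
  Bx0 dG d x Psi g = (((delta g) x == 0)%:R : C) * Psi g.
Proof.
rewrite ffunE fsbig_finite; last exact: chars_finite.
rewrite sum_ffunE.
under eq_bigr do rewrite ffunE /=.
rewrite -mulr_suml.
have := sum_chars C ((delta g) x); rewrite /cs => ->.
rewrite -[_ *: _]/(_ * _) !mulrA mulVf ?mul1r //.
by apply: natr_neq0; apply/card_gt0P; exists 0.
Qed.

Lemma Bx0_fix x (Psi : st) : Bx0 dG d x Psi = Psi <->
  forall g : coch 0, (delta g) x != 0 -> Psi g = 0.
Proof.
split => [e g nz|inv].
  by have := congr1 (fun F : st => F g) e; rewrite Bx0E (negbTE nz) mul0r.
apply/ffunP => g; rewrite Bx0E; case: eqP => [_|/eqP nz]; first by rewrite mul1r.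
by rewrite inv // mulr0.
Qed.

Definition gr (Psi : st) :=
  (forall g : coch 0, delta g != czero dim G (0 + 1) -> Psi g = 0) /\
  (forall (t : coch (-1)) (g : coch 0), Psi (csub g (delta t)) = Psi g).

Lemma inv_all (Psi : st) :
  (forall x (h : G (dim x + 1)) (g : coch 0),
    Psi (csub g (delta (loc (castG (dim x - -1) h) : coch (-1)))) = Psi g) ->
  forall (t : coch (-1)) (g : coch 0), Psi (csub g (delta t)) = Psi g.
Proof.
move=> inv t g.
suff H (s : seq X) : forall g : coch 0,
    Psi (csub g (delta ([ffun y => if y \in s then t y else 0] : coch (-1)))) = Psi g.
  have := H (enum X) g.
  have -> : ([ffun y => if y \in enum X then t y else 0] : coch (-1)) = t.
    by apply/ffunP => y; rewrite ffunE mem_enum.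
  by [].
elim: s => [|x s IH] g'.
  have -> : ([ffun y => if y \in [::] then t y else 0] : coch (-1)) = czero dim G (-1).
    by apply/ffunP => y; rewrite !ffunE.
  by rewrite delta0 csub0.
case xs: (x \in s).
  have -> : ([ffun y => if y \in x :: s then t y else 0] : coch (-1)) =
            [ffun y => if y \in s then t y else 0].
    apply/ffunP => y; rewrite !ffunE in_cons.
    by case: (eqVneq y x) => [e|//]; subst y; rewrite xs.
  exact: IH.
have -> : ([ffun y => if y \in x :: s then t y else 0] : coch (-1)) =
          cadd (loc (castG (dim x - -1) (castG (dim x + 1) (t x)))) [ffun y => if y \in s then t y else 0].
  apply/ffunP => y; rewrite !ffunE in_cons.
  case: (eqVneq y x) => [e|ne] /=; last by rewrite add0r.
  by subst y; rewrite xs addr0 !castG_comp // castG_id.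
by rewrite deltaD -csubA IH inv.
Qed.

Lemma ground_gr (Psi : st) : ground dG d Psi <-> gr Psi.
Proof.
split => [gP|[sP iP] x].
  split.
    move=> g nz.
    have [x hx] : exists x, (delta g) x != 0.
      apply/existsP; apply: contraR nz => /existsPn h.
      by apply/eqP/ffunP => x; rewrite [RHS]ffunE; apply/eqP; move: (h x); rewrite negbK.
    by have [_ /Bx0_fix] := gP x; apply.
  by apply: inv_all => x h g; have [/Ax0_fix H _] := gP x; apply: H.
split; first by apply/Ax0_fix => h g; apply: iP.
apply/Bx0_fix => g nz; apply: sP; apply: contraNneq nz => ->.
by rewrite ffunE.
Qed.

End Ops.


Theorem proposition5 (C : numClosedFieldType) (X : finType) (dim : X -> int)
  (G : int -> finZmodType) (dG : forall n : int, {additive G n -> G (n - 1)})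
  (d : X -> X -> int)
  (d_supp : forall x y : X, d x y != 0 -> dim y = dim x - 1)
  (dd : forall x z : X, \sum_(y : X) d x y * d y z = 0)
  (dGdG : forall (n : int) (g : G n), dG (n - 1) (dG n g) = 0) :
  let S := groundvecs C dim dG d in
  free S /\
  (forall Psi : state C dim G, ground dG d Psi <-> Psi \in <<S>>%VS) /\
  (forall f g : cochain dim G 0,
      delta dG d f = czero dim G (0 + 1) ->
      delta dG d g = czero dim G (0 + 1) ->
      (A0 dG d (ket C f) = A0 dG d (ket C g) <->
       exists t : cochain dim G (-1), csub f g = delta dG d t)).
Proof.
move=> S.
have Smem v : v \in S -> exists2 f : cochain dim G 0,
    delta dG d f = czero dim G (0 + 1) & v = A0 dG d (ket C f).
  rewrite /S /groundvecs mem_undup => /mapP[f]; rewrite mem_filter => /andP[hf _] ->.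
  by exists f => //; apply/eqP.
have memS (f : cochain dim G 0) : delta dG d f = czero dim G (0 + 1) -> A0 dG d (ket C f) \in S.
  move=> hf; rewrite /S /groundvecs mem_undup; apply/mapP; exists f => //.
  by rewrite mem_filter hf eqxx mem_enum.
have A0ff (f : cochain dim G 0) : A0 dG d (ket C f) f != 0.
  by apply/A0_ket_neq0; exists (czero dim G (-1)); rewrite delta0 csub0.
have grS v : v \in S -> gr dG d v.
  move=> /Smem[f hf ->]; split; last by move=> t g; apply: A0_ket_shift.
  move=> g nz; case: (eqVneq (A0 dG d (ket C f) g) 0) => // /A0_ket_neq0[t e].
  move: nz; rewrite -(csubK g (delta dG d t)) e deltaD hf deltaK //.
  have -> : cadd (czero dim G (0 + 1)) (czero dim G (0 + 1)) = czero dim G (0 + 1).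
    by apply/ffunP => x; rewrite !ffunE addr0.
  by rewrite eqxx.
split.
  apply/(@freeP _ _ _ (in_tuple S)) => k hk i.
  have vS : S`_i \in S by apply: mem_nth.
  have [f hf ev] := Smem _ vS.
  have := congr1 (fun F : state C dim G => F f) hk.
  rewrite sum_ffunE ffunE (bigD1 i) //= big1 ?addr0.
    by rewrite ffunE ev => /eqP; rewrite mulf_eq0 (negbTE (A0ff f)) orbF => /eqP.
  move=> j ji; rewrite ffunE.
  have wS : S`_j \in S by apply: mem_nth.
  have [f' hf' ew] := Smem _ wS.
  case: (eqVneq (S`_j f) 0) => [->|nz]; first by rewrite scaler0.
  exfalso; move: nz; rewrite ew => /A0_ket_neq0[t et].
  have : S`_i = S`_j.
    rewrite ev ew; apply: A0_ket_eq; exists t.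
    by rewrite -et csubKr.
  move/eqP; rewrite nth_uniq ?undup_uniq // => /eqP ij; apply: (negP ji); apply/eqP/val_inj; by rewrite /= ij.
split.
  move=> Psi; rewrite ground_gr //; split.
    move=> [sP iP].
    have -> : Psi = \sum_(f : cochain dim G 0 | delta dG d f == czero dim G (0 + 1))
                      Psi f *: A0 dG d (ket C f).
      apply/ffunP => g; rewrite sum_ffunE.
      under eq_bigr do rewrite ffunE A0_ketE natr_sum mulr_sumr -[_ *: _]/(_ * _) mulr_sumr.
      rewrite exchange_big /=.
      have inner (t : cochain dim G (-1)) :
          \sum_(f : cochain dim G 0 | delta dG d f == czero dim G (0 + 1))
            Psi f * ((#|{: cochain dim G (-1)}|%:R)^-1 *
              ((csub g (delta dG d t) == f : nat)%:R)) =
          (#|{: cochain dim G (-1)}|%:R)^-1 * Psi g.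
        have dgt : delta dG d (csub g (delta dG d t)) = delta dG d g.
          by rewrite deltaB deltaK // csub0.
        case: (eqVneq (delta dG d g) (czero dim G (0 + 1))) => [dg0|dgn].
          rewrite (bigD1 (csub g (delta dG d t))) /=; last by rewrite dgt dg0.
          rewrite eqxx mulr1 iP big1 ?addr0; first by rewrite mulrC.
          move=> f /andP[_ nf]; rewrite eq_sym (negbTE nf) mulr0 mulr0.
          by [].
        rewrite (sP g dgn) mulr0 big1 // => f /eqP df.
        case: (eqVneq (csub g (delta dG d t)) f) => [e|ne]; last by rewrite mulr0 mulr0.
        by move: dgn; rewrite -dgt e df eqxx.
      rewrite (eq_bigr _ (fun t _ => inner t)) sumr_const -(mulr_natr (_ * _)).
      by rewrite mulrAC mulVf ?mul1r //; apply: N_neq0.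
    apply: memv_suml => f hf; apply: memvZ; apply: memv_span; apply: memS.
    exact/eqP.
  move=> /(@coord_span _ _ _ (in_tuple S)) ->.
  split.
    move=> g nz; rewrite sum_ffunE; apply: big1 => i _; rewrite ffunE.
    by rewrite (proj1 (grS _ (mem_nth 0 (ltn_ord i)))) // scaler0.
  move=> t g; rewrite !sum_ffunE; apply: eq_bigr => i _; rewrite !ffunE.
  by rewrite (proj2 (grS _ (mem_nth 0 (ltn_ord i)))).
move=> f g hf hg; split => [e|]; last exact: A0_ket_eq.
have := A0ff f; rewrite e => /A0_ket_neq0[t et].
by exists t; rewrite -et csubKr.
Qed.
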